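(* If $D$ is a quaternary near-extremal Hermitian self-dual code of length $24$ and $\alpha$ denotes the number of codewords of weight $8$ in $D$, then $\alpha=9\beta$ for some integer $\beta$ with $1\le\beta\le 253$.
   Context: Let $\mathbb{F}_4=\{0,1,\omega,\omega^2\}$ with $\omega^2=\omega+1$. A quaternary code of length $n$ is a linear subspace of $\mathbb{F}_4^n$; it is Hermitian self-dual if it equals its dual with respect to $\langle x,y\rangle_H=\sum_k x_k y_k^2$. The weight of a vector is the number of nonzero coordinates. A quaternary Hermitian self-dual code of length $24$ is near-extremal if its minimum nonzero weight is $8$. *)

(* Defs.v *)
From mathcomp Require Import all_boot all_order all_algebra all_field.
Set Implicit Arguments. Unset Strict Implicit. Unset Printing Implicit Defensive.
Import GRing.Theory.
Local Open Scope ring_scope.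

(* Quaternary codes: F is a finite field with #|F| = 4 (unique up to iso, i.e. F_4). *)

Definition wt (F : finFieldType) (n : nat) (x : 'rV[F]_n) : nat :=
  #|[set i : 'I_n | x 0 i != 0]|.

Definition herm (F : finFieldType) (n : nat) (x y : 'rV[F]_n) : F :=
  \sum_(k < n) x 0 k * (y 0 k) ^+ 2.

Definition herm_self_dual (F : finFieldType) (n : nat) (C : {vspace 'rV[F]_n}) : Prop :=
  forall x : 'rV[F]_n, (x \in C) <-> (forall y : 'rV[F]_n, y \in C -> herm x y = 0).

Definition min_weight (F : finFieldType) (n : nat) (C : {vspace 'rV[F]_n}) (d : nat) : Prop :=
  (exists2 x, x \in C & (x != 0) && (wt x == d)) /\
  (forall x, x \in C -> x != 0 -> (d <= wt x)%N).

Definition num_weight (F : finFieldType) (n : nat) (C : {vspace 'rV[F]_n}) (w : nat) : nat :=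
  #|[set x : 'rV[F]_n | (x \in C) && (wt x == w)]|.

(* Main.v *)
Require Import Defs.
From mathcomp Require Import all_boot all_order all_algebra all_field.
From Stdlib Require Import ZArith Lia.
From mathcomp Require Import all_boot all_order all_algebra all_field all_fingroup.
From mathcomp Require Import mxabelem zify ssrZ.
Set Implicit Arguments. Unset Strict Implicit. Unset Printing Implicit Defensive.
Import GRing.Theory.

(* Proof outline: for every coordinate set S, a counting identity
   |{c in D | c|_S = 0}| * 4^|S| = |D| * |{c in D | supp c <= S}| (key),
   whence |D| = 4^12; double counting over sets S containing a fixed
   coordinate j gives linear (Pless-type) identities; a suitable integer
   combination of them yields B8 = 2 C8 (weight-8 words vanishing / not
   vanishing at j) and A10 + 8 A8 = 18216.  Scalar multiples give 3 | C8. *)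

Section SetCount.
Variable T : finType.
Implicit Types (S U Z : {set T}).

Lemma count_in (j : T) (r : nat) Z : j \in Z ->
  #|[set S : {set T} | (j \in S) && (#|S| == r.+1) && (S \subset Z)]| = 'C(#|Z|.-1, r).
Proof.
move=> jZ.
have -> : #|Z|.-1 = #|Z :\ j| by rewrite (cardsD1 j Z) jZ.
rewrite -cards_draws -(@card_in_imset _ _ (fun S => j |: S) [set S : {set T} | S \subset Z :\ j & #|S| == r]).
  apply: eq_card => S; rewrite !inE; apply/idP/imsetP.
    move=> /andP [/andP [jS /eqP cS] sZ]; exists (S :\ j).
      rewrite (cardsD1 j S) jS in cS; rewrite inE; move: cS; rewrite add1n => -[->]; rewrite eqxx andbT.
      by apply: setSD.
    by rewrite setD1K.
  move=> [S']; rewrite inE => /andP [sZ /eqP cS'] ->.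
  have jS' : j \notin S' by apply/negP => /(subsetP sZ); rewrite !inE eqxx.
  rewrite setU11 /= cardsU1 jS' cS' /= eqxx /=.
  by rewrite subUset sub1set jZ (subset_trans sZ) // subD1set.
move=> S1 S2; rewrite !inE => /andP [s1 _] /andP [s2 _] E.
have j1 : j \notin S1 by apply/negP => /(subsetP s1); rewrite !inE eqxx.
have j2 : j \notin S2 by apply/negP => /(subsetP s2); rewrite !inE eqxx.
by rewrite -(setU1K j1) -(setU1K j2) E.
Qed.

Lemma count_notin (j : T) (r : nat) Z : j \notin Z ->
  #|[set S : {set T} | (j \in S) && (#|S| == r) && (S \subset Z)]| = 0.
Proof.
move=> jZ; apply: eq_card0 => S; rewrite !inE.
by apply/negP => /andP [/andP [jS _] /subsetP /(_ _ jS)]; apply/negP.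
Qed.

Lemma count_sup (r : nat) U : r <= #|T| ->
  #|[set S : {set T} | (#|S| == r) && (U \subset S)]| = 'C(#|~: U|, #|T| - r).
Proof.
move=> rT; rewrite -cards_draws -[RHS](card_imset _ (@setC_inj T)).
apply: eq_card => S; rewrite !inE; apply/idP/imsetP.
  move=> /andP [/eqP cS uS]; exists (~: S); last by rewrite setCK.
  rewrite inE setCS uS -cS; have := cardsC S; lia.
move=> [S']; rewrite inE => /andP [s' /eqP c'] ->.
rewrite -setCS setCK s' andbT; have := cardsC S'; lia.
Qed.

End SetCount.

Local Open Scope ring_scope.

Section Key.
Variables (F : finFieldType) (n : nat).
Implicit Types (S : {set 'I_n}) (c : 'rV[F]_n).

Definition msk (S : {set 'I_n}) : 'M[F]_n := diag_mx (\row_i (i \in S)%:R).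

Lemma mskE (c : 'rV[F]_n) S i : (c *m msk S) 0 i = if i \in S then c 0 i else 0.
Proof. by rewrite mul_mx_diag !mxE; case: (i \in S); rewrite ?mulr1 ?mulr0. Qed.

Lemma msk0P (c : 'rV[F]_n) S : reflect (forall i, i \in S -> c 0 i = 0) (c *m msk S == 0).
Proof.
apply: (iffP eqP) => [H i iS | H].
  by have := congr1 (fun m : 'rV[F]_n => m 0 i) H; rewrite mskE iS mxE.
by apply/rowP => i; rewrite mskE mxE; case: ifP => // /H.
Qed.

Lemma card_supp (S : {set 'I_n}) :
  #|[set c : 'rV[F]_n | c *m msk (~: S) == 0]| = (#|F| ^ #|S|)%N.
Proof.
pose phi (f : {ffun 'I_n -> F}) : 'rV[F]_n := \row_i f i.
have phi_inj : injective phi.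
  by move=> f g /rowP H; apply/ffunP => i; have := H i; rewrite !mxE.
rewrite -(card_pffun_on 0 S (predT : {pred F})) -(card_imset _ phi_inj).
apply: eq_card => c; rewrite inE; apply/idP/imsetP.
  move/msk0P => H; exists [ffun i => c 0 i].
    apply/pffun_onP; split.
      apply/subsetP => i; rewrite inE ffunE; apply: contraR => iS.
      by rewrite H ?inE.
    by [].
  by apply/rowP => i; rewrite !mxE ffunE.
move=> [f /pffun_onP [Hs _] ->]; apply/msk0P => i; rewrite inE => iS.
rewrite mxE; apply/eqP; apply: contraR iS => Hf; apply: (subsetP Hs).
by rewrite inE.
Qed.

Lemma mskPQ c S : (c *m msk S) *m msk (~: S) = 0.
Proof. by apply/rowP => i; rewrite !mskE inE mxE; case: (i \in S). Qed.

Lemma mskQP c S : c *m msk (~: S) = 0 -> c *m msk S = c.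
Proof.
move/eqP/msk0P => H; apply/rowP => i; rewrite mskE.
by case: ifP => // iS; rewrite H // inE iS.
Qed.

Lemma tr_msk S : (msk S)^T = msk S.
Proof. by rewrite /msk tr_diag_mx. Qed.

End Key.
Arguments msk {F n}.

Section Code.
Variables (F : finFieldType) (HF : #|F| = 4%N) (n : nat) (D : {vspace 'rV[F]_n}).
Hypothesis Hsd : herm_self_dual D.
Implicit Types (S : {set 'I_n}) (c : 'rV[F]_n).
Implicit Types (x y : 'rV[F]_n).

Lemma pchar2 : (2 \in [pchar F])%N.
Proof. by apply: (@card_finPcharP _ 2 2). Qed.

Lemma x4 (x : F) : x ^+ 4 = x.
Proof. by rewrite -{2}(expf_card x) HF. Qed.

Lemma sq_inj : injective (fun x : F => x ^+ 2).
Proof. by move=> x y /= H; rewrite -(x4 x) -(x4 y) (exprM _ 2 2) H -exprM. Qed.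

Lemma sqr_sum (I : finType) (a : I -> F) : (\sum_i a i) ^+ 2 = \sum_i (a i) ^+ 2.
Proof.
have := rmorph_sum (pFrobenius_aut pchar2) (index_enum I) predT a.
rewrite /= !pFrobenius_autE => ->; apply: eq_bigr => i _; exact: pFrobenius_autE.
Qed.

Lemma herm_sq x y : (herm x y) ^+ 2 = herm y x.
Proof.
rewrite /herm sqr_sum; apply: eq_bigr => k _.
by rewrite exprMn -exprM x4 mulrC.
Qed.

Lemma herm_sym x y : (herm x y == 0) = (herm y x == 0).
Proof. by rewrite -herm_sq expf_eq0. Qed.

Definition frob (y : 'rV[F]_n) : 'rV[F]_n := map_mx (fun a : F => a ^+ 2) y.

Lemma frob_inj : injective frob.
Proof. by move=> a b /rowP H; apply/rowP => i; have := H i; rewrite !mxE => /sq_inj. Qed.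

Lemma mx11_eq0 (M : 'M[F]_1) : (M == 0) = (M 0 0 == 0).
Proof.
apply/eqP/eqP => [-> | H]; first by rewrite mxE.
by apply/matrixP => i j; rewrite !ord1 H mxE.
Qed.

Lemma herm_mx c y : (c *m (frob y)^T == 0) = (herm c y == 0).
Proof.
rewrite mx11_eq0 mxE /herm; congr (_ == 0); apply: eq_bigr => k _.
by rewrite !mxE.
Qed.

Definition G : 'M[F]_(\dim D, n) := \matrix_(i < \dim D) (vbasis D)`_i.

Lemma memD c : (c \in D) = (c <= G)%MS.
Proof.
apply/idP/idP => [cD | /submxP [u ->]].
  rewrite (coord_vbasis cD); apply: summx_sub => i _.
  apply: scalemx_sub; have -> : (vbasis D)`_i = row i G by rewrite rowK.
  exact: row_sub.
rewrite mulmx_sum_row; apply: rpred_sum => i _; apply: rpredZ.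
by rewrite rowK; apply: vbasis_mem; apply: mem_nth; rewrite size_tuple.
Qed.

Lemma memD_frob y : (y \in D) = (frob y *m G^T == 0).
Proof.
apply/idP/idP => [yD | H].
  have H1 : forall c, c \in D -> c *m (frob y)^T = 0.
    move=> c cD; apply/eqP; rewrite herm_mx herm_sym; apply/eqP.
    by have [H2 _] := Hsd y; apply: H2.
  rewrite -trmx_eq0 trmx_mul trmxK; apply/eqP/row_matrixP => i.
  by rewrite row_mul row0 H1 // memD row_sub.
apply/(Hsd y) => c cD; apply/eqP; rewrite -herm_sym -herm_mx.
move: cD; rewrite memD => /submxP [u ->].
by rewrite -mulmxA -(trmxK G) -trmx_mul (eqP H) trmx0 mulmx0.
Qed.

End Code.

Section Key2.
Variables (F : finFieldType) (HF : #|F| = 4%N) (n : nat) (D : {vspace 'rV[F]_n}).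
Hypothesis Hsd : herm_self_dual D.
Implicit Types (S : {set 'I_n}) (c : 'rV[F]_n).
Implicit Types (y : 'rV[F]_n).

Lemma frobK : involutive (@frob F n).
Proof. by move=> y; apply/rowP => i; rewrite !mxE -exprM x4. Qed.

Lemma frob_msk0 y S : (frob y *m msk S == 0) = (y *m msk S == 0).
Proof.
apply/msk0P/msk0P => H i iS; have := H i iS; rewrite ?mxE.
  by move/eqP; rewrite expf_eq0 /= => /eqP.
by move=> ->; rewrite expr0n.
Qed.

Lemma cardD : #|[set c | c \in D]| = (#|F| ^ \rank (G D))%N.
Proof. by rewrite -card_rowg; apply: eq_card => c; rewrite !inE memD. Qed.

Lemma key S :
  (#|[set c | (c \in D) && (c *m msk S == 0%R)]| * #|F| ^ #|S|
   = #|[set c | c \in D]| * #|[set c | (c \in D) && (c *m msk (~: S) == 0%R)]|)%N.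
Proof.
set P := msk S; set Q := msk (~: S).
set A := [set f : 'rV[F]_n | (f *m Q == 0) && (f *m (G D)^T == 0)].
set B := [set g : 'rV[F]_n | g *m P == 0].
set X := [set f : 'rV[F]_n | f *m (P *m (G D)^T) == 0].
have cv : #|[set c | (c \in D) && (c *m P == 0)]| = (#|F| ^ \rank (G D :&: kermx P))%N.
  by rewrite -card_rowg; apply: eq_card => c; rewrite !inE memD sub_capmx sub_kermx.
have hr := mxrank_mul_ker (G D) P.
have cs : #|[set c | (c \in D) && (c *m Q == 0)]| = #|A|.
  rewrite -(card_preimset _ (can_inj frobK)); apply: eq_card => f.
  by rewrite !inE (memD_frob HF Hsd) frob_msk0 andbC.
have cB : #|B| = (#|F| ^ #|~: S|)%N.
  by rewrite -card_supp setCK.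
have cX : #|X| = (#|F| ^ (n - \rank (G D *m P)))%N.
  rewrite -(mxrank_tr (G D *m P)) trmx_mul tr_msk -mxrank_ker -card_rowg.
  by apply: eq_card => f; rewrite !inE sub_kermx.
have cAB : (#|A| * #|B|)%N = #|X|.
  rewrite -cardsX -(@card_in_imset _ _ (fun p => p.1 + p.2)).
    apply: eq_card => f; apply/imsetP/idP.
      move=> [[a b]]; rewrite !inE /= => /andP [/andP [aQ aG] bP] ->.
      by rewrite mulmxDl !mulmxA (eqP bP) mul0mx addr0 (mskQP (eqP aQ)).
    move=> fX; exists (f *m P, f *m Q).
      move: fX; rewrite !inE /= => fX.
      rewrite mskPQ eqxx -(mulmxA f P) fX /=.
      by have := mskPQ f (~: S); rewrite setCK => ->.
    by apply/rowP => i; rewrite [in RHS]mxE !mskE inE; case: (i \in S); rewrite ?addr0 ?add0r.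
  move=> [a b] [a' b']; rewrite !inE /= => /andP[/andP[aQ _] bP] /andP[/andP[a'Q _] b'P] E.
  have : (a + b) *m P = (a' + b') *m P by rewrite E.
  rewrite !mulmxDl (eqP bP) (eqP b'P) !addr0 (mskQP (eqP aQ)) (mskQP (eqP a'Q)) => ea.
  by move: E; rewrite ea => /addrI ->.
have cS : (#|S| + #|~: S|)%N = n by rewrite cardsC card_ord.
have E : (#|A| * #|F| ^ #|~: S|)%N = (#|F| ^ (n - \rank (G D *m P)))%N by rewrite -cB cAB cX.
have rn := rank_leq_col (G D *m P).
rewrite cv cardD cs; apply/eqP; rewrite -(@eqn_pmul2r (#|F| ^ #|~: S|)); last by rewrite HF expn_gt0.
rewrite -(mulnA (#|F| ^ \rank (G D))%N) E -!expnD; apply/eqP; congr (_ ^ _)%N.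
by rewrite -hr -addnA cS [(\rank (G D *m P) + _)%N]addnC -addnA subnKC.
Qed.
End Key2.

Lemma card_sumb (T : finType) (pT : predType T) (A : pT) (P : pred T) :
  #|[set x | (x \in A) && P x]| = (\sum_(x in A) P x)%N.
Proof.
rewrite -sum1_card big_mkcond [RHS]big_mkcond /=; apply: eq_bigr => x _.
by rewrite inE; case: (x \in A); case: (P x).
Qed.

Section DC.
Variables (F : finFieldType) (HF : #|F| = 4%N) (n : nat) (D : {vspace 'rV[F]_n}).
Hypothesis Hsd : herm_self_dual D.
Implicit Types (S : {set 'I_n}) (c : 'rV[F]_n).

Definition supp c := [set i | c 0 i != 0].

Lemma msk0_sub c S : (c *m msk S == 0)%R = (S \subset ~: supp c).
Proof.
apply/msk0P/subsetP => H i iS; first by rewrite !inE negbK; apply/eqP; apply: H.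
by have := H i iS; rewrite !inE negbK => /eqP.
Qed.

Lemma mskC0_sub c S : (c *m msk (~: S) == 0)%R = (supp c \subset S).
Proof. by rewrite msk0_sub setCS. Qed.

Lemma double_count (j : 'I_n) (r : nat) : (r < n)%N ->
  ((\sum_(c in D) ((c 0%R j == 0%R) * 'C(n - wt c - 1, r))) * #|F| ^ r.+1 =
  #|[set c | c \in D]| * \sum_(c in D) 'C(n - (wt c + (c 0%R j == 0%R)), n - r.+1))%N.
Proof.
move=> rn.
pose Sr := [set S : {set 'I_n} | (j \in S) && (#|S| == r.+1)].
have K := eq_bigr (P := fun S => S \in Sr) _ (fun S _ => key HF Hsd S).
have E1 : (\sum_(S in Sr) (#|[set c | (c \in D) && (c *m msk S == 0%R)]| * #|F| ^ #|S|) =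
          (\sum_(c in D) ((c 0%R j == 0%R) * 'C(n - wt c - 1, r))) * #|F| ^ r.+1)%N.
  rewrite (eq_bigr (fun S => #|[set c | (c \in D) && (c *m msk S == 0%R)]| * #|F| ^ r.+1)%N); last first.
    by move=> S; rewrite inE => /andP [_ /eqP ->].
  rewrite -big_distrl /=; congr muln.
  rewrite (eq_bigr (fun S => \sum_(c in D) (c *m msk S == 0%R : nat))%N); last by move=> S _; rewrite card_sumb.
  rewrite exchange_big /=; apply: eq_bigr => c _.
  rewrite -card_sumb.
  rewrite (eq_card (B := [set S : {set 'I_n} | (j \in S) && (#|S| == r.+1) && (S \subset ~: supp c)])); last first.
    by move=> S; rewrite !inE msk0_sub.
  have cZ : #|~: supp c| = (n - wt c)%N by rewrite cardsCs setCK card_ord.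
  case: (boolP (j \in ~: supp c)) => jZ.
    rewrite count_in // cZ subn1; move: jZ; rewrite !inE negbK => ->; by rewrite mul1n.
  rewrite count_notin //; move: jZ; rewrite !inE negbK => /negbTE ->; by [].
have E2 : (\sum_(S in Sr) (#|[set c | c \in D]| * #|[set c | (c \in D) && (c *m msk (~: S) == 0%R)]|) =
   #|[set c | c \in D]| * \sum_(c in D) 'C(n - (wt c + (c 0%R j == 0%R)), n - r.+1))%N.
  rewrite -big_distrr /=; congr muln.
  rewrite (eq_bigr (fun S => \sum_(c in D) (c *m msk (~: S) == 0%R : nat)))%N; last by move=> S _; rewrite card_sumb.
  rewrite exchange_big /=; apply: eq_bigr => c _.
  rewrite -card_sumb.
  rewrite (eq_card (B := [set S : {set 'I_n} | (#|S| == r.+1) && ((j |: supp c) \subset S)])); last first.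
    by move=> S; rewrite !inE mskC0_sub subUset sub1set; case: (j \in S); case: (#|S| == r.+1).
  rewrite (@count_sup _ r.+1 (j |: supp c)) ?card_ord //; congr binomial.
  rewrite cardsCs setCK card_ord cardsU1 !inE negbK addnC //.
by rewrite -E1 -E2.
Qed.
End DC.

Section S24.
Variables (F : finFieldType) (HF : #|F| = 4%N) (D : {vspace 'rV[F]_24}).
Hypothesis Hsd : herm_self_dual D.
Hypothesis Hmin : min_weight D 8.
Implicit Types (S : {set 'I_24}) (c : 'rV[F]_24).

Lemma cardD12 : #|[set c | c \in D]| = (4 ^ 12)%N.
Proof.
have K := key HF Hsd setT.
have E1 : [set c | (c \in D) && (c *m msk setT == 0)] = [set 0].
  apply/setP => c; rewrite !inE.
  have -> : c *m msk setT = c by apply: mskQP; apply/eqP/msk0P => i; rewrite !inE.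
  by apply/andP/eqP => [[_ /eqP] // | ->]; rewrite mem0v.
have E2 : [set c | (c \in D) && (c *m msk (~: setT) == 0)] = [set c | c \in D].
  apply/setP => c; rewrite !inE; suff -> : c *m msk (~: setT) == 0 by rewrite andbT.
  by apply/msk0P => i; rewrite !inE.
move: K; rewrite E1 E2 cards1 mul1n cardsT card_ord HF => /esym/eqP.
have h : (4 ^ 24 = 4 ^ 12 * 4 ^ 12)%N by rewrite -expnD.
rewrite h !mulnn eqn_exp2r; [by move/eqP | by []].

Qed.


Lemma wt0 c : wt c = 0%N -> c = 0.
Proof.
move/eqP; rewrite cards_eq0 => /eqP H; apply/rowP => i; rewrite mxE.
have : i \notin [set i | c 0 i != 0] by rewrite H inE.
by rewrite inE negbK => /eqP.
Qed.

Lemma x3 (x : F) : x != 0 -> x ^+ 3 = 1.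
Proof. by move=> x0; apply: (mulfI x0); rewrite -exprS x4 // mulr1. Qed.

Lemma herm_self c : herm c c = (wt c)%:R.
Proof.
rewrite /herm /wt -sum1_card natr_sum [RHS]big_mkcond /=; apply: eq_bigr => k _.
rewrite inE -exprS; case: eqP => [-> | /eqP ck]; first by rewrite expr0n.
by rewrite x3.
Qed.

Lemma wt_even c : c \in D -> ~~ odd (wt c).
Proof.
move=> cD; have : herm c c = 0 by have [H _] := Hsd c; apply: H.
rewrite herm_self => /eqP; rewrite -(dvdn_pcharf (pchar2 HF)).
by rewrite dvdn2.
Qed.

Lemma wt_le c : (wt c <= 24)%N.
Proof. by rewrite /wt; apply: leq_trans (max_card _) _; rewrite card_ord. Qed.

Lemma wt_cases c : c \in D -> wt c \in [:: 0; 8; 10; 12; 14; 16; 18; 20; 22; 24]%N.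
Proof.
move=> cD; have ev := wt_even cD; have le := wt_le c.
case: (eqVneq c 0) => [-> | c0].
  suff -> : wt (0 : 'rV[F]_24) = 0%N by [].
  by apply/eqP; rewrite cards_eq0; apply/eqP/setP => i; rewrite !inE mxE eqxx.
have := Hmin.2 c cD c0; move: ev le; move: (wt c) => w.
do 25? (case: w => [|w] //).
Qed.

End S24.

Lemma Zsum (I : finType) (P : pred I) (f : I -> nat) :
  Z.of_nat (\sum_(i | P i) f i)%N = \sum_(i | P i) Z.of_nat (f i).
Proof.
apply: (big_morph Z.of_nat) => [x y|]; last by [].
by rewrite /GRing.add /=; lia.
Qed.

Lemma Zmul (a b : nat) : Z.of_nat (a * b)%N = Z.of_nat a * Z.of_nat b.
Proof. by rewrite /GRing.mul /=; lia. Qed.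

Definition z4 : Z := Z.of_nat 4.

Lemma Zexp (k : nat) : Z.of_nat (4 ^ k)%N = z4 ^+ k.
Proof.
elim: k => [|k IH] //; rewrite expnS exprS Zmul IH //.
Qed.

Fixpoint pnext (p : Z) (r : seq Z) : seq Z :=
  match r with [::] => [:: p] | x :: r' => Z.add p x :: pnext x r' end.
Fixpoint prow (a : nat) : seq Z := if a is a'.+1 then pnext Z0 (prow a') else [:: (Zpos xH)].
Definition zC (a b : nat) : Z := nth Z0 (prow a) b.

Lemma nth_pnext p r k : nth Z0 (pnext p r) k = Z.add (nth Z0 (p :: r) k) (nth Z0 r k).
Proof.
elim: r p k => [|x r IH] p k.
  case: k => [|k] /=; first lia.
  case: k => [|k] /=; lia.
case: k => [|k] /=; first lia.
by rewrite IH.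
Qed.

Lemma zC_bin a b : Z.of_nat 'C(a, b) = zC a b.
Proof.
rewrite /zC; elim: a b => [|a IH] [|b] /=.
- by [].
- by case: b.
- by rewrite nth_pnext /= -IH bin0.
- by rewrite nth_pnext /= -!IH binS Nat2Z.inj_add; lia.
Qed.

Definition FzC (r w : nat) (b : bool) : Z :=
  (if b then zC (24 - w - 1) r else Z0) * z4 ^+ r.+1
  - z4 ^+ 12 * zC (24 - (w + b)) (24 - r.+1).

Definition W (lam : seq (nat * Z)) (w : nat) (b : bool) : Z :=
  foldr (fun p acc => p.2 * FzC p.1 w b + acc) 0 lam.

Local Open Scope Z_scope.
Definition lam1 : seq (nat * Z) :=
  [:: (8%nat, 20800); (9%nat, (-43680)); (10%nat, 44304); (11%nat, (-26664));
      (12%nat, 9372); (13%nat, (-1950)); (14%nat, 195)].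
Definition K1 : Z := 9017283837952.
Definition T1f (w : nat) (b : bool) : Z :=
  if w == 8%nat then (if b then (- K1) else (2 * K1)) else 0.

Definition lam2 : seq (nat * Z) :=
  [:: (8%nat, 192); (9%nat, (-480)); (10%nat, 440); (11%nat, 0);
      (12%nat, (-110)); (13%nat, 30); (14%nat, (-3))].
Definition K2 : Z := 173409304576.
Definition K2_8 : Z := 8 * K2.
Definition K2_m : Z := - 18216 * K2.
Definition T2f (w : nat) (b : bool) : Z :=
  if w == 10%nat then K2 else if w == 8%nat then K2_8
  else if w == 0%nat then K2_m else 0.

Definition wlist : seq nat := [:: 0; 8; 10; 12; 14; 16; 18; 20; 22; 24]%nat.

Local Close Scope Z_scope.

Definition check (lam : seq (nat * Z)) (T : nat -> bool -> Z) : bool :=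
  all (fun w => all (fun b => ((w == 0%N) ==> b) ==> (W lam w b == T w b)) [:: true; false]) wlist.

Lemma check1 : check lam1 T1f.
Proof. vm_compute. reflexivity. Qed.

Lemma check2 : check lam2 T2f.
Proof. vm_compute. reflexivity. Qed.

Section Final.
Variables (F : finFieldType) (HF : #|F| = 4%N) (D : {vspace 'rV[F]_24}).
Hypothesis Hsd : herm_self_dual D.
Hypothesis Hmin : min_weight D 8.
Implicit Types (c : 'rV[F]_24).
Let j : 'I_24 := ord0.

Lemma eqZ r : (r < 24)%N -> \sum_(c in D) FzC r (wt c) (c 0 j == 0) = 0.
Proof.
move=> r24; have H := double_count HF Hsd j r24.
rewrite cardD12 // HF in H; have := congr1 Z.of_nat H.
rewrite (Zmul _ (4 ^ r.+1)) (Zmul (4 ^ 12)) !Zexp !Zsum => {}H.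
rewrite /FzC sumrB -mulr_suml -mulr_sumr.
have -> : \sum_(c in D) (if c 0 j == 0 then zC (24 - wt c - 1) r else Z0) =
          \sum_(c in D) Z.of_nat ((c 0%R j == 0%R) * 'C(24 - wt c - 1, r))%N.
  by apply: eq_bigr => c _; case: (c 0 j == 0); rewrite ?mul1n ?mul0n ?zC_bin.
have -> : \sum_(c in D) zC (24 - (wt c + (c 0 j == 0))) (24 - r.+1) =
          \sum_(c in D) Z.of_nat 'C(24 - (wt c + (c 0 j == 0)), 24 - r.+1).
  by apply: eq_bigr => c _; rewrite zC_bin.
by rewrite H subrr.
Qed.


Lemma sumW lam : all (fun p => p.1 < 24)%N lam ->
  \sum_(c in D) W lam (wt c) (c 0 j == 0) = 0.
Proof.
elim: lam => [|p lam IH] /=; first by rewrite big1.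
move=> /andP [p24 h].
have -> : \sum_(c in D) W (p :: lam) (wt c) (c 0 j == 0) =
  \sum_(c in D) (p.2 * FzC p.1 (wt c) (c 0 j == 0) + W lam (wt c) (c 0 j == 0)) by [].
by rewrite big_split /= -mulr_sumr eqZ // mulr0 IH // add0r.
Qed.

Lemma Wpt lam T : check lam T -> forall c, c \in D ->
  W lam (wt c) (c 0 j == 0) = T (wt c) (c 0 j == 0).
Proof.
move=> ch c cD; have wc := wt_cases HF Hsd Hmin cD.
have w0 : (wt c == 0%N) ==> (c 0 j == 0).
  apply/implyP => /eqP /wt0 ->; by rewrite mxE.
move: ch; rewrite /check => /allP /(_ _ wc) /allP H.
have Hb : (c 0 j == 0) \in [:: true; false] by case: (c 0 j == 0).
have := H _ Hb.
by rewrite w0 /= => /eqP.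
Qed.

Lemma sumT lam T : check lam T -> all (fun p => p.1 < 24)%N lam ->
  \sum_(c in D) T (wt c) (c 0 j == 0) = 0.
Proof.
move=> ch h; transitivity (\sum_(c in D) W lam (wt c) (c 0 j == 0)); last exact: sumW h.
by apply: eq_bigr => c cD; rewrite (Wpt ch).
Qed.

Lemma sum_if (P : pred 'rV[F]_24) (x : Z) :
  \sum_(c in D) (if P c then x else 0) = x * Z.of_nat #|[set c | (c \in D) && P c]|.
Proof.
rewrite card_sumb Zsum mulr_sumr; apply: eq_bigr => c _.
by case: (P c); rewrite ?mulr1 ?mulr0.
Qed.

Definition B8 := #|[set c | (c \in D) && ((wt c == 8%N) && (c 0 j == 0))]|.
Definition C8 := #|[set c | (c \in D) && ((wt c == 8%N) && ~~ (c 0 j == 0))]|.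

Lemma B8C8 : B8 = (2 * C8)%N.
Proof.
have := sumT check1 isT.
rewrite (eq_bigr (fun c => (if (wt c == 8%N) && (c 0 j == 0) then (- K1)%R else 0) +
   (if (wt c == 8%N) && ~~ (c 0 j == 0) then (2 * K1)%R else 0))); last first.
  by move=> c _; rewrite /T1f; case: (wt c == 8%N); case: (c 0 j == 0); rewrite /= ?addr0 ?add0r.
rewrite big_split /= !sum_if -/B8 -/C8.
rewrite /K1 => E.
apply/Nat2Z.inj; rewrite Nat2Z.inj_mul; lia.
Qed.


Definition N1 := #|[set c | (c \in D) && ((wt c == 8%N) && (c 0 j == 1))]|.

Lemma wtZ (a : F) c : a != 0 -> wt (a *: c) = wt c.
Proof. by move=> a0; apply: eq_card => i; rewrite !inE mxE mulf_eq0 negb_or a0. Qed.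

Lemma fiber (a : F) : a != 0 ->
  #|[set c | (c \in D) && ((wt c == 8%N) && (c 0 j == a))]| = N1.
Proof.
move=> a0; rewrite /N1 -[RHS](card_imset _ (scalerI a0)).
apply: eq_card => c; rewrite !inE; apply/idP/imsetP.
  move=> /andP [cD /andP [w8 cj]]; exists (a^-1 *: c).
    rewrite inE memvZ //= wtZ ?invr_eq0 // w8 /= mxE (eqP cj) mulVf //.
  by rewrite scalerA divff // scale1r.
move=> [c' ]; rewrite inE => /andP [cD /andP [w8 cj]] ->.
by rewrite memvZ //= wtZ // w8 mxE (eqP cj) mulr1 /=.
Qed.

Lemma C8N1 : C8 = (3 * N1)%N.
Proof.
rewrite /C8 -sum1_card (partition_big (fun c : 'rV[F]_24 => c 0 j) predT) //=.
rewrite (bigD1 0) //= big1; last first.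
  by move=> c; rewrite inE => /andP [/andP [_ /andP [_ /negP H]] /eqP E]; exfalso; apply: H; apply/eqP.
rewrite add0n (eq_bigr (fun _ => N1)); last first.
  move=> a a0; rewrite -(fiber a0) -sum1_card; apply: eq_bigl => c.
  rewrite !inE; case: (c \in D) => //=; case: (wt c == 8%N) => //=.
  by case: eqP => // ->; rewrite eq_sym (negbTE a0).
rewrite sum_nat_const.
have -> : #|[pred a : F | a != 0]| = 3%N.
  rewrite -[3%N]/(4.-1) -HF -(cardC1 (0 : F)); apply: eq_card => a; by rewrite !inE.
by rewrite mulnC.
Qed.


Lemma alpha_split : num_weight D 8 = (B8 + C8)%N.
Proof.
rewrite /num_weight /B8 /C8 !card_sumb -big_split; apply: eq_bigr => c _.
by case: (wt c == 8%N); case: (c 0 j == 0).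
Qed.

Lemma A0_le1 : (#|[set c | (c \in D) && (wt c == 0%N)]| <= 1)%N.
Proof.
apply: (@leq_trans #|[set (0 : 'rV[F]_24)]|); last by rewrite cards1.
apply: subset_leq_card; apply/subsetP => c.
by rewrite !inE => /andP [_ /eqP /wt0 ->].
Qed.

Lemma upper : (num_weight D 8 <= 2277)%N.
Proof.
have := sumT check2 isT.
rewrite (eq_bigr (fun c => (if wt c == 10%N then K2 else 0) +
   (if wt c == 8%N then K2_8 else 0) + (if wt c == 0%N then K2_m else 0))); last first.
  move=> c _; rewrite /T2f; case: (wt c == 10%N) /eqP => [->|_] /=; first by rewrite !addr0.
  case: (wt c == 8%N) /eqP => [->|_] /=; first by rewrite add0r addr0.
  by case: (wt c == 0%N); rewrite !add0r.
rewrite !big_split /= !sum_if -/(num_weight D 8) /K2_8 /K2_m /K2 => E.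
have := A0_le1; lia.
Qed.

Lemma main_result : exists beta : nat, num_weight D 8 = (9 * beta)%N /\ (1 <= beta <= 253)%N.
Proof.
have E : num_weight D 8 = (9 * N1)%N by rewrite alpha_split B8C8 C8N1; lia.
exists N1; split => //.
have U := upper.
have P : (0 < num_weight D 8)%N.
  have [[x xD /andP [x0 /eqP w8]] _] := Hmin.
  rewrite /num_weight card_gt0; apply/set0Pn; exists x; by rewrite inE xD w8 eqxx.
apply/andP; split; lia.
Qed.

End Final.

Theorem fact5p1 (F : finFieldType) (HF : #|F| = 4%N) (D : {vspace 'rV[F]_24})
  (Hsd : herm_self_dual D) (Hmin : min_weight D 8) :
  exists beta : nat, num_weight D 8 = (9 * beta)%N /\ (1 <= beta <= 253)%N.
Proof.
exact: (main_result HF Hsd Hmin).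
Qed.
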